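(* Let $\{X(t)\}$ be generated by the voting diffusion model with a communicating pair process $\{\{i_1(t),i_2(t)\}\}$ and a subject process $\{S(t)\}$. Fix a candidate $j\in[n]$ and define the random graph $G^{(j)}=([m],E^{(j)})$ by $$E^{(j)}=\Big\{\{a,b\}: a\ne b\in[m],\ \sum_{t=0}^{\infty}\mathbf{1}_{\{\{i_1(t),i_2(t)\}=\{a,b\}\}}\,\mathbf{1}_{\{j\in S(t)\}}=\infty\Big\},$$ i.e. $\{a,b\}$ is an edge iff $a$ and $b$ are the communicating pair and candidate $j$ is in the subject set at infinitely many times. Then for any agents $a,b\in[m]$, the event that $a$ and $b$ lie in the same connected component of $G^{(j)}$ is contained in the event $\{\lim_{t\to\infty}(X_{aj}(t)-X_{bj}(t))=0\}$.
   Context: Voting diffusion model: there are $m$ agents indexed by $[m]=\{1,\dots,m\}$ and $n$ candidates indexed by $[n]$. The opinion profile at time $t\in\{0,1,2,\dots\}$ is a random real $m\times n$ matrix $X(t)$, where $X_{ij}(t)$ is agent $i$'s score of candidate $j$. A communicating pair process is a sequence of random unordered pairs $\{i_1(t),i_2(t)\}$ with $i_1(t)\ne i_2(t)\in[m]$; a subject process is a sequence of random subsets $S(t)\subseteq[n]$; both are arbitrary (measurable) processes. The update is: $X_{ij}(t+1)=\tfrac12\big(X_{i_1(t)j}(t)+X_{i_2(t)j}(t)\big)$ if $i\in\{i_1(t),i_2(t)\}$ and $j\in S(t)$, and $X_{ij}(t+1)=X_{ij}(t)$ otherwise. *)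

(* Defs.v *)
From Stdlib Require Export Reals Relations.
Open Scope R_scope.

(* Agents are 0..m-1, candidates 0..n-1.  One sample path of the voting
   diffusion model: X t i j is agent i's score of candidate j at time t;
   {i1 t, i2 t} is the communicating pair and Sub t the subject set at time t. *)
Definition voting_diffusion (m n : nat) (X : nat -> nat -> nat -> R)
    (i1 i2 : nat -> nat) (Sub : nat -> nat -> Prop) : Prop :=
  (forall t, (i1 t < m)%nat /\ (i2 t < m)%nat /\ i1 t <> i2 t) /\
  (forall t i j, (i < m)%nat -> (j < n)%nat ->
     ((i = i1 t \/ i = i2 t) /\ Sub t j ->
        X (t + 1)%nat i j = (X t (i1 t) j + X t (i2 t) j) / 2) /\
     (~ ((i = i1 t \/ i = i2 t) /\ Sub t j) ->
        X (t + 1)%nat i j = X t i j)).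

Definition edge_j (m : nat) (i1 i2 : nat -> nat) (Sub : nat -> nat -> Prop)
    (j a b : nat) : Prop :=
  (a < m)%nat /\ (b < m)%nat /\ a <> b /\
  forall N : nat, exists t : nat, (N <= t)%nat /\
    ((i1 t = a /\ i2 t = b) \/ (i1 t = b /\ i2 t = a)) /\ Sub t j.

Definition same_component (m : nat) (i1 i2 : nat -> nat)
    (Sub : nat -> nat -> Prop) (j a b : nat) : Prop :=
  clos_refl_trans nat (edge_j m i1 i2 Sub j) a b.

(* Main.v *)
Require Import Defs.
From Stdlib Require Import Reals Relations Lra Lia Classical.
Open Scope R_scope.

Fixpoint sumsq (f : nat -> R) (k : nat) : R :=
  match k with O => 0 | S k => sumsq f k + f k ^ 2 end.

Lemma sumsq_nonneg f k : 0 <= sumsq f k.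
Proof. induction k; simpl; nra. Qed.

Lemma sumsq_ext f g k : (forall i, (i < k)%nat -> g i = f i) -> sumsq g k = sumsq f k.
Proof.
  induction k; intros H; simpl; auto.
  rewrite IHk by (intros; apply H; lia). rewrite H by lia. ring.
Qed.

Lemma sumsq_one f g k p : (p < k)%nat ->
  (forall i, (i < k)%nat -> i <> p -> g i = f i) ->
  sumsq g k = sumsq f k - f p ^ 2 + g p ^ 2.
Proof.
  induction k; intros Hp H; [lia|]. simpl.
  destruct (Nat.eq_dec p k) as [->|Hne].
  - rewrite (sumsq_ext f g k) by (intros; apply H; lia). ring.
  - rewrite IHk by (try lia; intros; apply H; lia). rewrite (H k) by lia. ring.
Qed.

Lemma band_lemma (eps : R) : 0 < eps -> forall n (f : nat -> R) lo,
  exists k, (k <= n)%nat /\ forall i, (i < n)%nat ->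
    ~ (lo + INR k * eps <= f i < lo + INR k * eps + eps).
Proof.
  intros He n; induction n; intros f lo.
  - exists O; split; [lia|]; intros; lia.
  - destruct (classic (exists i0, (i0 < S n)%nat /\ lo <= f i0 < lo + eps)) as [[i0 [Hi0 Hb]]|Hno].
    + set (g := fun i => if Nat.ltb i i0 then f i else f (S i)).
      destruct (IHn g (lo + eps)) as [k [Hk Hg]].
      exists (S k); split; [lia|]. intros i Hi. rewrite S_INR.
      destruct (Nat.lt_total i i0) as [Hlt|[Heq|Hgt]].
      * specialize (Hg i ltac:(lia)). unfold g in Hg.
        rewrite (proj2 (Nat.ltb_lt i i0) Hlt) in Hg.
        intro; apply Hg; split; [|]; nra.
      * subst i. pose proof (pos_INR k). nra.
      * destruct i as [|i']; [lia|].
        specialize (Hg i' ltac:(lia)). unfold g in Hg.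
        rewrite (proj2 (Nat.ltb_ge i' i0) ltac:(lia)) in Hg.
        intro; apply Hg; split; nra.
    + exists O; split; [lia|]. intros i Hi Hb. apply Hno. exists i.
      split; [auto|]. simpl in Hb. lra.
Qed.

Lemma crossing {A : Type} (Rl : relation A) (P : A -> Prop) a b :
  clos_refl_trans A Rl a b -> (P a /\ ~ P b \/ ~ P a /\ P b) ->
  exists u v, Rl u v /\ (P u /\ ~ P v \/ ~ P u /\ P v).
Proof.
  induction 1 as [x y H|x|x y z H1 IH1 H2 IH2]; intros Hc.
  - exists x, y; auto.
  - tauto.
  - destruct (classic (P y)); destruct Hc; first [apply IH2; tauto | apply IH1; tauto].
Qed.

Section S.
Variables (m n : nat) (X : nat -> nat -> nat -> R) (i1 i2 : nat -> nat)
  (Sub : nat -> nat -> Prop) (j : nat).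
Hypothesis HV : voting_diffusion m n X i1 i2 Sub.
Hypothesis Hj : (j < n)%nat.

Definition Vs s := sumsq (fun i => X s i j) m.

Lemma step_active s : Sub s j ->
  Vs (S s) = Vs s - (X s (i1 s) j - X s (i2 s) j) ^ 2 / 2.
Proof.
  intros HS. destruct HV as [H1 H2]. destruct (H1 s) as [Hp [Hq Hpq]].
  set (p := i1 s) in *. set (q := i2 s) in *.
  set (f := fun i => X s i j). set (g := fun i => X (S s) i j).
  set (h := fun i => if Nat.eqb i p then g p else f i).
  assert (Eh : sumsq h m = sumsq f m - f p ^ 2 + h p ^ 2).
  { apply sumsq_one; auto. intros i _ Hi. unfold h.
    rewrite (proj2 (Nat.eqb_neq i p) Hi). reflexivity. }
  assert (Eg : sumsq g m = sumsq h m - h q ^ 2 + g q ^ 2).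
  { apply sumsq_one; auto. intros i Hi Hiq. unfold h, g, f.
    destruct (Nat.eqb_spec i p) as [->|Hip]; [reflexivity|].
    rewrite <- Nat.add_1_r. apply (proj2 (H2 s i j Hi Hj)). tauto. }
  assert (Gp : g p = (f p + f q) / 2).
  { unfold g, f. rewrite <- Nat.add_1_r. apply (proj1 (H2 s p j Hp Hj)). tauto. }
  assert (Gq : g q = (f p + f q) / 2).
  { unfold g, f. rewrite <- Nat.add_1_r. apply (proj1 (H2 s q j Hq Hj)). tauto. }
  assert (hp : h p = g p) by (unfold h; rewrite Nat.eqb_refl; auto).
  assert (hq : h q = f q).
  { unfold h. rewrite (proj2 (Nat.eqb_neq q p) (not_eq_sym Hpq)). auto. }
  unfold Vs. fold f g. rewrite Eg, Eh, hp, hq, Gp, Gq. unfold f. field.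
Qed.

Lemma step_inactive s : ~ Sub s j -> Vs (S s) = Vs s.
Proof.
  intros HS. destruct HV as [H1 H2]. unfold Vs. apply sumsq_ext.
  intros i Hi. rewrite <- Nat.add_1_r. apply (proj2 (H2 s i j Hi Hj)). tauto.
Qed.

Lemma Vs_dec : Un_decreasing Vs.
Proof.
  intro s. destruct (classic (Sub s j)).
  - rewrite step_active by auto. pose proof (pow2_ge_0 (X s (i1 s) j - X s (i2 s) j)). lra.
  - rewrite step_inactive by auto. lra.
Qed.

Lemma small_diff d : 0 < d -> exists T, forall s, (T <= s)%nat -> Sub s j ->
  Rabs (X s (i1 s) j - X s (i2 s) j) <= d.
Proof.
  intros Hd.
  assert (Hlb : has_lb Vs).
  { exists 0. intros x [k ->]. unfold opp_seq. pose proof (sumsq_nonneg (fun i => X k i j) m).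
    unfold Vs. lra. }
  destruct (decreasing_cv Vs Vs_dec Hlb) as [l Hl].
  destruct (Hl (d ^ 2 / 2)) as [N HN]; [nra|].
  exists N. intros s Hs HS.
  pose proof (decreasing_ineq Vs l Vs_dec Hl (S s)).
  pose proof (decreasing_prop Vs N s Vs_dec Hs).
  specialize (HN N (le_n N)). unfold Rdist in HN. apply Rabs_def2 in HN.
  pose proof (step_active s HS).
  set (e := X s (i1 s) j - X s (i2 s) j) in *.
  destruct (Rle_dec (Rabs e) d) as [|Hgt]; [auto|exfalso].
  assert (d < Rabs e) by lra.
  assert (d^2 < e^2).
  { rewrite <- (pow2_abs e). pose proof (Rabs_pos e). nra. }
  lra.
Qed.

End S.

Lemma invariant m n X i1 i2 Sub j (HV : voting_diffusion m n X i1 i2 Sub) (Hj : (j < n)%nat)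
  eps c1 T t : 0 < eps -> (T <= t)%nat ->
  (forall s, (T <= s)%nat -> Sub s j -> Rabs (X s (i1 s) j - X s (i2 s) j) <= eps / 2) ->
  (forall i, (i < m)%nat -> X t i j < c1 \/ c1 + eps <= X t i j) ->
  forall k i, (i < m)%nat -> (X t i j < c1 -> X (t + k)%nat i j < c1) /\
     (~ X t i j < c1 -> c1 + eps <= X (t + k)%nat i j).
Proof.
  intros He HT Hsm Hpart k. induction k; intros i Hi.
  - rewrite Nat.add_0_r. split; intros; [auto|]. destruct (Hpart i Hi); lra.
  - rewrite Nat.add_succ_r, <- Nat.add_1_r. set (s := (t + k)%nat) in *.
    destruct HV as [H1 H2]. destruct (H2 s i j Hi Hj) as [Ha Hn].
    destruct (classic ((i = i1 s \/ i = i2 s) /\ Sub s j)) as [[Hor HS]|Hna].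
    + rewrite Ha by tauto. destruct (H1 s) as [Hp [Hq _]].
      pose proof (IHk _ Hp) as IHp. pose proof (IHk _ Hq) as IHq.
      pose proof (Hsm s ltac:(unfold s; lia) HS) as Hd.
      pose proof (Rle_abs (X s (i1 s) j - X s (i2 s) j)).
      pose proof (Rle_abs (- (X s (i1 s) j - X s (i2 s) j))). rewrite Rabs_Ropp in *.
      destruct (classic (X t (i1 s) j < c1)); destruct (classic (X t (i2 s) j < c1));
      destruct Hor; subst i; split; intros; try tauto; lra.
    + rewrite Hn by tauto. apply IHk; auto.
Qed.

Theorem theorem3 (m n : nat) (X : nat -> nat -> nat -> R)
    (i1 i2 : nat -> nat) (Sub : nat -> nat -> Prop) (j a b : nat) :
  voting_diffusion m n X i1 i2 Sub ->
  (j < n)%nat -> (a < m)%nat -> (b < m)%nat ->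
  same_component m i1 i2 Sub j a b ->
  Un_cv (fun t => X t a j - X t b j) 0.
Proof.
  intros HV Hj Ha Hb Hc eps Heps. apply NNPP. intro Hno.
  assert (Hinf : forall N, exists t, (N <= t)%nat /\ eps <= Rabs (X t a j - X t b j)).
  { intro N. apply NNPP. intro H. apply Hno. exists N. intros t Ht.
    unfold Rdist. rewrite Rminus_0_r. apply Rnot_le_lt. intro. apply H. eauto. }
  pose proof (pos_INR m) as Hm.
  set (e := eps / (INR m + 1)).
  assert (He : 0 < e) by (unfold e; apply Rdiv_lt_0_compat; lra).
  assert (Hme : (INR m + 1) * e = eps) by (unfold e; field; lra).
  destruct (small_diff m n X i1 i2 Sub j HV Hj (e / 2) ltac:(lra)) as [T HT].
  destruct (Hinf T) as [t [Ht Hbig]].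
  assert (core : forall p q, (p < m)%nat -> (q < m)%nat ->
            eps <= X t q j - X t p j -> (a = p /\ b = q \/ a = q /\ b = p) -> False).
  { intros p q Hp Hq Hpq Hab.
    destruct (band_lemma e He m (fun i => X t i j) (X t p j)) as [k [Hk Hband]].
    set (c1 := X t p j + INR k * e) in *.
    assert (Hpart : forall i, (i < m)%nat -> X t i j < c1 \/ c1 + e <= X t i j).
    { intros i Hi. specialize (Hband i Hi). simpl in Hband.
      destruct (Rlt_le_dec (X t i j) c1); [auto|]. right. apply Rnot_lt_le. intro. tauto. }
    assert (HkI : INR k <= INR m) by (apply le_INR; auto).
    assert (Pp : X t p j < c1).
    { destruct (Hpart p Hp); auto. pose proof (pos_INR k). unfold c1 in *. nra. }
    assert (Pq : ~ X t q j < c1).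
    { unfold c1. nra. }
    set (P := fun i => X t i j < c1).
    assert (Hcr : P a /\ ~ P b \/ ~ P a /\ P b) by (unfold P; destruct Hab as [[-> ->]|[-> ->]]; tauto).
    destruct (crossing _ P a b Hc Hcr) as [u [v [[Hu [Hv [_ Hedge]]] Huv]]].
    destruct (Hedge t) as [s [Hs [Hpair HS]]].
    pose proof (invariant m n X i1 i2 Sub j HV Hj e c1 T t He Ht HT Hpart (s - t) u Hu) as Iu.
    pose proof (invariant m n X i1 i2 Sub j HV Hj e c1 T t He Ht HT Hpart (s - t) v Hv) as Iv.
    replace (t + (s - t))%nat with s in Iu, Iv by lia.
    pose proof (HT s ltac:(lia) HS) as Hd.
    pose proof (Rle_abs (X s (i1 s) j - X s (i2 s) j)).
    pose proof (Rle_abs (- (X s (i1 s) j - X s (i2 s) j))). rewrite Rabs_Ropp in *.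
    unfold P in Huv.
    destruct Hpair as [[E1 E2]|[E1 E2]]; rewrite E1, E2 in *;
      destruct Huv as [[H3 H4]|[H3 H4]];
      destruct Iu as [Iu1 Iu2]; destruct Iv as [Iv1 Iv2];
      first [specialize (Iu1 H3); specialize (Iv2 H4); lra
            |specialize (Iu2 H3); specialize (Iv1 H4); lra]. }
  destruct (Rle_dec 0 (X t a j - X t b j)).
  - rewrite Rabs_right in Hbig by lra. apply (core b a); auto; lra.
  - rewrite Rabs_left in Hbig by lra. apply (core a b); auto; lra.
Qed.
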